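(* A Turing degree $\mathbf{d}$ is low for embeddings if and only if it is low for bi-embeddings.
   Context: A Turing degree $\mathbf{d}$ is low for embeddings if for all computable structures $\mathcal{A},\mathcal{B}$: whenever there is a $\mathbf{d}$-computable isomorphic embedding $f\colon\mathcal{A}\hookrightarrow\mathcal{B}$, there is a computable isomorphic embedding $g\colon\mathcal{A}\hookrightarrow\mathcal{B}$. Write $\mathcal{A}\approx_{\mathbf{d}}\mathcal{B}$ if there are $\mathbf{d}$-computable embeddings $\mathcal{A}\hookrightarrow\mathcal{B}$ and $\mathcal{B}\hookrightarrow\mathcal{A}$. The degree $\mathbf{d}$ is low for bi-embeddings if for all computable structures $\mathcal{A},\mathcal{B}$, $\mathcal{A}\approx_{\mathbf{d}}\mathcal{B}$ implies $\mathcal{A}\approx_{\mathbf{0}}\mathcal{B}$. *)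

(* Defs.v *)
From Stdlib Require Import List Arith.
Import ListNotations.

Inductive rf : Type :=
| RZero
| RSucc
| RProj (i : nat)
| ROracle
| RComp (f : rf) (gs : list rf)
| RPrim (f g : rf)
| RMu (f : rf).

Inductive eval (O : nat -> bool) : rf -> list nat -> nat -> Prop :=
| ev_zero xs : eval O RZero xs 0
| ev_succ xs : eval O RSucc xs (S (hd 0 xs))
| ev_proj i xs : eval O (RProj i) xs (nth i xs 0)
| ev_oracle xs : eval O ROracle xs (if O (hd 0 xs) then 1 else 0)
| ev_comp f gs xs ys y :
    evals O gs xs ys -> eval O f ys y -> eval O (RComp f gs) xs y
| ev_prim0 f g xs y :
    eval O f xs y -> eval O (RPrim f g) (0 :: xs) y
| ev_primS f g n xs r y :
    eval O (RPrim f g) (n :: xs) r -> eval O g (n :: r :: xs) y ->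
    eval O (RPrim f g) (S n :: xs) y
| ev_mu f xs y :
    eval O f (y :: xs) 0 ->
    (forall z, z < y -> exists v, v <> 0 /\ eval O f (z :: xs) v) ->
    eval O (RMu f) xs y
with evals (O : nat -> bool) : list rf -> list nat -> list nat -> Prop :=
| evs_nil xs : evals O [] xs []
| evs_cons g gs xs y ys :
    eval O g xs y -> evals O gs xs ys -> evals O (g :: gs) xs (y :: ys).

Definition O_computable (O : nat -> bool) (h : nat -> nat) : Prop :=
  exists e : rf, forall x, eval O e [x] (h x).

Definition empty_oracle : nat -> bool := fun _ => false.

Definition computable_fun (h : nat -> nat) : Prop := O_computable empty_oracle h.

Definition b2n (b : bool) : nat := if b then 1 else 0.

(** A structure with universe a subset [sdom] of nat, in a language with
    relation symbols indexed by nat, symbol [i] having arity [sar i];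
    [srel i xs] is the truth value of [R_i(xs)]. (Constants and functions are
    represented by their graphs.) *)
Record structure : Type := Structure {
  sdom : nat -> bool;
  sar  : nat -> nat;
  srel : nat -> list nat -> bool
}.

Definition in_dom (A : structure) (xs : list nat) : Prop :=
  forall x, In x xs -> sdom A x = true.

Definition computable_structure (A : structure) : Prop :=
  computable_fun (fun x => b2n (sdom A x)) /\
  computable_fun (sar A) /\
  exists e : rf, forall i xs,
    length xs = sar A i -> in_dom A xs ->
    eval empty_oracle e (i :: xs) (b2n (srel A i xs)).

Definition is_embedding (A B : structure) (f : nat -> nat) : Prop :=
  (forall i, sar A i = sar B i) /\
  (forall x, sdom A x = true -> sdom B (f x) = true) /\
  (forall x y, sdom A x = true -> sdom A y = true -> f x = f y -> x = y) /\
  (forall i xs, length xs = sar A i -> in_dom A xs ->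
     srel B i (map f xs) = srel A i xs).

Definition O_embeds (O : nat -> bool) (A B : structure) : Prop :=
  exists f, O_computable O f /\ is_embedding A B f.

Definition O_biembeddable (O : nat -> bool) (A B : structure) : Prop :=
  O_embeds O A B /\ O_embeds O B A.

(** A Turing degree is represented by any set [D] (characteristic function)
    of that degree; both notions below are degree invariant. *)
Definition low_for_embeddings (D : nat -> bool) : Prop :=
  forall A B : structure,
    computable_structure A -> computable_structure B ->
    O_embeds D A B -> O_embeds empty_oracle A B.

Definition low_for_biembeddings (D : nat -> bool) : Prop :=
  forall A B : structure,
    computable_structure A -> computable_structure B ->
    O_biembeddable D A B -> O_biembeddable empty_oracle A B.

(* Main.v *)
Require Import Defs.
From Stdlib Require Import List Arith Lia Cantor Classical.
Import ListNotations.

Fixpoint tri n := match n with 0 => 0 | S i => S i + tri i end.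
Definition ifz (t u w : nat) := match t with 0 => w | S _ => u end.

Definition ADD := RPrim (RProj 0) (RComp RSucc [RProj 1]).
Definition PRED := RPrim RZero (RProj 0).
Definition MONUS := RPrim (RProj 0) (RComp PRED [RProj 1]).
Definition CASE := RPrim (RProj 1) (RProj 2).
Definition TRI := RPrim RZero (RComp ADD [RComp RSucc [RProj 0]; RProj 1]).
Fixpoint cconst n := match n with 0 => RZero | S n => RComp RSucc [cconst n] end.
Definition c_if t u w := RComp CASE [t; u; w].
Definition c_sub x y := RComp MONUS [y; x].
Definition c_add x y := RComp ADD [x; y].
Definition c_eq x y := c_if (c_add (c_sub x y) (c_sub y x)) (cconst 0) (cconst 1).
Definition ROOT := RMu (c_sub (RComp RSucc [RProj 1]) (RComp TRI [RComp RSucc [RProj 0]])).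
Definition VAL := c_sub (RProj 0) (RComp TRI [ROOT]).
Definition COPY := c_sub ROOT VAL.
Definition PAIR := c_add (RProj 1) (RComp TRI [c_add (RProj 1) (RProj 0)]).
Definition cp x := fst (of_nat x).
Definition vl x := snd (of_nat x).
Definition pr c v := to_nat (c, v).

Lemma tri_eq n : tri n = nat_rec _ 0 (fun i m => S i + m) n.
Proof. induction n; simpl; auto. Qed.

Lemma pr_eq c v : pr c v = v + tri (v + c).
Proof. unfold pr, to_nat. f_equal. Qed.

Lemma cp_pr c v : cp (pr c v) = c.
Proof. unfold cp, pr. now rewrite cancel_of_to. Qed.
Lemma vl_pr c v : vl (pr c v) = v.
Proof. unfold vl, pr. now rewrite cancel_of_to. Qed.
Lemma pr_cp_vl x : pr (cp x) (vl x) = x.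
Proof. unfold cp, vl, pr. rewrite <- surjective_pairing. apply cancel_to_of. Qed.
Lemma cp0 : cp 0 = 0.
Proof. reflexivity. Qed.

Lemma tri_mono a b : a <= b -> tri a <= tri b.
Proof. induction 1; simpl; lia. Qed.

Section Tool.
Variable O : nat -> bool.
Definition cm e (F : list nat -> nat) := forall env, eval O e env (F env).

Lemma ev1 f g xs y z : eval O g xs y -> eval O f [y] z -> eval O (RComp f [g]) xs z.
Proof. intros. eapply ev_comp; [apply evs_cons; [eauto|apply evs_nil]|eauto]. Qed.
Lemma ev2 f g1 g2 xs y1 y2 z : eval O g1 xs y1 -> eval O g2 xs y2 -> eval O f [y1;y2] z -> eval O (RComp f [g1;g2]) xs z.
Proof. intros. eapply ev_comp; [repeat (apply evs_cons; [eauto|]); apply evs_nil|eauto]. Qed.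
Lemma ev3 f g1 g2 g3 xs y1 y2 y3 z : eval O g1 xs y1 -> eval O g2 xs y2 -> eval O g3 xs y3 -> eval O f [y1;y2;y3] z -> eval O (RComp f [g1;g2;g3]) xs z.
Proof. intros. eapply ev_comp; [repeat (apply evs_cons; [eauto|]); apply evs_nil|eauto]. Qed.

Lemma ev_eq e xs y z : eval O e xs y -> y = z -> eval O e xs z.
Proof. now intros ? <-. Qed.

Lemma evP i xs y : nth i xs 0 = y -> eval O (RProj i) xs y.
Proof. intros <-. apply ev_proj. Qed.

Lemma ADD_ok a b : eval O ADD [a; b] (a + b).
Proof.
  induction a.
  - apply ev_prim0. now apply evP.
  - eapply ev_primS; [exact IHa|].
    eapply ev1; [now apply evP|]. apply (ev_succ O [a+b]).
Qed.

Lemma PRED_ok a : eval O PRED [a] (pred a).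
Proof.
  induction a.
  - apply ev_prim0. apply ev_zero.
  - eapply ev_primS; [exact IHa|]. now apply evP.
Qed.

Lemma MONUS_ok b a : eval O MONUS [b; a] (a - b).
Proof.
  induction b.
  - apply ev_prim0. apply evP. simpl. lia.
  - eapply ev_primS; [exact IHb|]. eapply ev1; [now apply evP|].
    replace (a - S b) with (pred (a - b)) by lia. apply PRED_ok.
Qed.

Lemma CASE_ok t u w : eval O CASE [t; u; w] (ifz t u w).
Proof.
  destruct t.
  - apply ev_prim0. now apply evP.
  - assert (H : forall t, exists r, eval O CASE [t; u; w] r).
    { induction t0. exists w. apply ev_prim0. now apply evP.
      destruct IHt0 as [r Hr]. exists u. eapply ev_primS; [exact Hr|]. now apply evP. }
    destruct (H t) as [r Hr]. eapply ev_primS; [exact Hr|]. now apply evP.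
Qed.

Lemma TRI_ok n : eval O TRI [n] (tri n).
Proof.
  induction n.
  - apply ev_prim0. apply ev_zero.
  - eapply ev_primS; [exact IHn|]. eapply ev2; [| |apply ADD_ok].
    + eapply ev1; [now apply evP|]. apply (ev_succ O [n]).
    + now apply evP.
Qed.

Lemma cconst_ok n xs : eval O (cconst n) xs n.
Proof. induction n; simpl. apply ev_zero. eapply ev1; [exact IHn|]. apply (ev_succ O [n]). Qed.

Lemma c_if_ok t u w xs T U W : eval O t xs T -> eval O u xs U -> eval O w xs W -> eval O (c_if t u w) xs (ifz T U W).
Proof. intros. eapply ev3; eauto. apply CASE_ok. Qed.
Lemma c_sub_ok x y xs X Y : eval O x xs X -> eval O y xs Y -> eval O (c_sub x y) xs (X - Y).
Proof. intros. eapply ev2; eauto. apply MONUS_ok. Qed.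
Lemma c_add_ok x y xs X Y : eval O x xs X -> eval O y xs Y -> eval O (c_add x y) xs (X + Y).
Proof. intros. eapply ev2; eauto. apply ADD_ok. Qed.
Lemma c_eq_ok x y xs X Y : eval O x xs X -> eval O y xs Y -> eval O (c_eq x y) xs (b2n (X =? Y)).
Proof.
  intros. replace (b2n (X =? Y)) with (ifz (X - Y + (Y - X)) 0 1).
  - apply c_if_ok; [apply c_add_ok; apply c_sub_ok; auto| apply cconst_ok | apply cconst_ok].
  - destruct (Nat.eqb_spec X Y); simpl.
    + subst. now rewrite Nat.sub_diag.
    + destruct (X - Y + (Y - X)) eqn:E; [lia|reflexivity].
Qed.

Lemma ifz_b2n (b : bool) u w : ifz (b2n b) u w = if b then u else w.
Proof. now destruct b. Qed.

Lemma of_nat_spec x : cp x + vl x <= x /\ x < tri (S (cp x + vl x)) /\ x = vl x + tri (cp x + vl x).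
Proof.
  assert (H : x = vl x + tri (cp x + vl x)).
  { rewrite <- (pr_cp_vl x) at 1. rewrite pr_eq. f_equal. f_equal. lia. }
  assert (Hn : forall n, n <= tri n) by (induction n; simpl; lia).
  pose proof (Hn (cp x + vl x)). simpl. lia.
Qed.

Lemma ROOT_ok x : eval O ROOT [x] (cp x + vl x).
Proof.
  destruct (of_nat_spec x) as [_ [H1 H2]].
  apply ev_mu.
  - eapply ev_eq; [apply c_sub_ok| ].
    + eapply ev1; [now apply evP|]. apply (ev_succ O [x]).
    + eapply ev1; [|apply TRI_ok]. eapply ev1; [now apply evP|]. apply (ev_succ O [_]).
    + simpl nth. simpl hd. revert H1. generalize (tri (S (cp x + vl x))). intros; lia.
  - intros z Hz. exists (S x - tri (S z)). split.
    + pose proof (tri_mono (S z) (cp x + vl x)). lia.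
    + apply c_sub_ok.
      * eapply ev1; [now apply evP|]. apply (ev_succ O [x]).
      * eapply ev1; [|apply TRI_ok]. eapply ev1; [now apply evP|]. apply (ev_succ O [_]).
Qed.

Lemma VAL_ok x : eval O VAL [x] (vl x).
Proof.
  destruct (of_nat_spec x) as [_ [_ H2]].
  eapply ev_eq; [apply c_sub_ok; [now apply evP| eapply ev1; [apply ROOT_ok|apply TRI_ok]]|].
  simpl nth. revert H2. generalize (tri (cp x + vl x)). intros; lia.
Qed.

Lemma COPY_ok x : eval O COPY [x] (cp x).
Proof.
  eapply ev_eq; [apply c_sub_ok; [apply ROOT_ok|apply VAL_ok]|]. lia.
Qed.

Lemma PAIR_ok c v : eval O PAIR [c; v] (pr c v).
Proof.
  rewrite pr_eq. apply c_add_ok. now apply evP.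
  eapply ev1; [|apply TRI_ok]. apply c_add_ok; now apply evP.
Qed.

End Tool.
Fixpoint bnd (e : rf) : nat :=
  match e with
  | RZero => 0 | RSucc => 1 | RProj i => S i | ROracle => 1
  | RComp _ gs => list_max (map bnd gs)
  | RPrim f g => S (max (bnd f) (bnd g))
  | RMu f => bnd f
  end.

Definition agree b (env env' : list nat) :=
  (forall i, i < b -> nth i env 0 = nth i env' 0) /\ (length env <= length env' \/ b <= length env').

Lemma agree_mono b b' env env' : b' <= b -> agree b env env' -> agree b' env env'.
Proof. intros Hb [H1 H2]. split; [intros; apply H1; lia | lia]. Qed.

Lemma agree_tail b n xs env' : agree (S b) (n :: xs) env' ->
  exists xs', env' = n :: xs' /\ agree b xs xs'.
Proof.
  intros [H1 H2]. destruct env' as [|m xs'].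
  - simpl in H2. lia.
  - exists xs'. pose proof (H1 0 ltac:(lia)) as E. simpl in E. subst. split; auto.
    split; [intros i Hi; apply (H1 (S i)); lia | simpl in H2; lia].
Qed.

Lemma agree_cons b m xs xs' : agree b xs xs' -> agree (S b) (m :: xs) (m :: xs').
Proof.
  intros [H1 H2]. split; [intros [|i] Hi; simpl; auto; apply H1; lia | simpl; lia].
Qed.

Lemma list_max_in g gs : In g gs -> bnd g <= list_max (map bnd gs).
Proof.
  induction gs; simpl; [tauto|]. intros [<-|H]; [lia|]. specialize (IHgs H). lia.
Qed.

Fixpoint eval_bnd O e env y (H : eval O e env y) {struct H} :
  forall env', agree (bnd e) env env' -> eval O e env' y
with evals_bnd O gs env ys (H : evals O gs env ys) {struct H} :
  forall env', agree (list_max (map bnd gs)) env env' -> evals O gs env' ys.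
Proof.
  - destruct H; intros env' Ha; simpl in Ha.
    + apply ev_zero.
    + destruct Ha as [H1 _]. specialize (H1 0 ltac:(lia)).
      replace (hd 0 xs) with (hd 0 env'). apply ev_succ. destruct xs, env'; simpl in *; auto.
    + destruct Ha as [H1 _]. rewrite (H1 i ltac:(lia)). apply ev_proj.
    + destruct Ha as [H1 _]. specialize (H1 0 ltac:(lia)).
      replace (hd 0 xs) with (hd 0 env'). apply ev_oracle. destruct xs, env'; simpl in *; auto.
    + eapply ev_comp; [apply (evals_bnd _ _ _ _ H); exact Ha | exact H0].
    + destruct (agree_tail _ _ _ _ Ha) as [xs' [-> Ha']].
      apply ev_prim0. apply (eval_bnd _ _ _ _ H). eapply agree_mono; [|exact Ha']. lia.
    + destruct (agree_tail _ _ _ _ Ha) as [xs' [-> Ha']].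
      eapply ev_primS.
      * apply (eval_bnd _ _ _ _ H). simpl. apply agree_cons. exact Ha'.
      * apply (eval_bnd _ _ _ _ H0). eapply agree_mono; [|apply agree_cons, agree_cons, Ha']. lia.
    + apply ev_mu.
      * apply (eval_bnd _ _ _ _ H). destruct Ha as [H1 H2].
        split; [intros [|i] Hi; simpl; auto; apply H1; lia | simpl; lia].
      * intros z Hz. destruct (H0 z Hz) as [v [Hv Hev]]. exists v. split; [exact Hv|].
        apply (eval_bnd _ _ _ _ Hev). destruct Ha as [H1 H2].
        split; [intros [|i] Hi; simpl; auto; apply H1; lia | simpl; lia].
  - destruct H; intros env' Ha.
    + apply evs_nil.
    + simpl in Ha. apply evs_cons.
      * apply (eval_bnd _ _ _ _ H). eapply agree_mono; [|exact Ha]. lia.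
      * apply (evals_bnd _ _ _ _ H0). eapply agree_mono; [|exact Ha]. lia.
Qed.
Open Scope bool_scope.

Definition isA (isS : bool) c := isS && (c =? 0).
Definition tA (A : structure) a0 isS c y :=
  if (cp y =? c) && isA isS c && sdom A (vl y) then vl y else a0.
Definition tB (B : structure) bs isS c y :=
  if (cp y =? c) && negb (isA isS c) && sdom B (vl y) then vl y else bs.

Definition Cstr (A B : structure) (a0 bs : nat) (isS : bool) : structure :=
  Structure (fun x => if isA isS (cp x) then sdom A (vl x) else sdom B (vl x))
            (fun i => match i with 0 => 2 | S k => sar A k end)
            (fun i xs => match i with
                         | 0 => cp (nth 0 xs 0) =? cp (nth 1 xs 0)
                         | S k => let c := cp (nth 0 xs 0) in
                                  if isA isS c then srel A k (map (tA A a0 isS c) xs)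
                                  else srel B k (map (tB B bs isS c) xs)
                         end).

Definition c_cp g := RComp COPY [g].
Definition c_vl g := RComp VAL [g].
Definition c_isA (isS : bool) c := if isS then c_eq c (cconst 0) else RZero.
Definition c_tA isS dA a0 c y :=
  c_if (c_eq (c_cp y) c)
       (c_if (c_isA isS c) (c_if (RComp dA [c_vl y]) (c_vl y) (cconst a0)) (cconst a0))
       (cconst a0).
Definition c_tB isS dB bs c y :=
  c_if (c_eq (c_cp y) c)
       (c_if (c_isA isS c) (cconst bs) (c_if (RComp dB [c_vl y]) (c_vl y) (cconst bs)))
       (cconst bs).
Definition c_K := RComp PRED [RProj 0].
Definition BR rZ sZ (tc : rf -> rf) M :=
  RComp rZ (c_K :: map (fun j => c_if (c_sub (RComp sZ [c_K]) (cconst j)) (tc (RProj (S j))) (cconst 0)) (seq 0 M)).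

Section Codes.
Variable O : nat -> bool.

Lemma c_cp_ok g env G : eval O g env G -> eval O (c_cp g) env (cp G).
Proof. intros. eapply ev1; [eauto|apply COPY_ok]. Qed.
Lemma c_vl_ok g env G : eval O g env G -> eval O (c_vl g) env (vl G).
Proof. intros. eapply ev1; [eauto|apply VAL_ok]. Qed.
Lemma c_isA_ok isS c env C : eval O c env C -> eval O (c_isA isS c) env (b2n (isA isS C)).
Proof.
  intros. destruct isS; simpl.
  - apply c_eq_ok; auto. apply ev_zero.
  - apply ev_zero.
Qed.

Lemma c_tA_ok (A : structure) dA a0 isS c y env C Y :
  (forall x, eval O dA [x] (b2n (sdom A x))) ->
  eval O c env C -> eval O y env Y -> eval O (c_tA isS dA a0 c y) env (tA A a0 isS C Y).
Proof.
  intros HdA Hc Hy. eapply ev_eq.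
  - apply c_if_ok; [apply c_eq_ok; [apply c_cp_ok; eauto|eauto]| |apply cconst_ok].
    apply c_if_ok; [apply c_isA_ok; eauto| |apply cconst_ok].
    apply c_if_ok; [eapply ev1; [apply c_vl_ok; eauto|apply HdA] | apply c_vl_ok; eauto | apply cconst_ok].
  - unfold tA. rewrite !ifz_b2n. destruct (cp Y =? C), (isA isS C), (sdom A (vl Y)); reflexivity.
Qed.

Lemma c_tB_ok (B : structure) dB bs isS c y env C Y :
  (forall x, eval O dB [x] (b2n (sdom B x))) ->
  eval O c env C -> eval O y env Y -> eval O (c_tB isS dB bs c y) env (tB B bs isS C Y).
Proof.
  intros HdB Hc Hy. eapply ev_eq.
  - apply c_if_ok; [apply c_eq_ok; [apply c_cp_ok; eauto|eauto]| |apply cconst_ok].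
    apply c_if_ok; [apply c_isA_ok; eauto| apply cconst_ok|].
    apply c_if_ok; [eapply ev1; [apply c_vl_ok; eauto|apply HdB] | apply c_vl_ok; eauto | apply cconst_ok].
  - unfold tB. rewrite !ifz_b2n. destruct (cp Y =? C), (isA isS C), (sdom B (vl Y)); reflexivity.
Qed.

Lemma evals_map (G : nat -> rf) (W : nat -> nat) l env :
  (forall j, eval O (G j) env (W j)) -> evals O (map G l) env (map W l).
Proof. intros H. induction l; simpl; constructor; auto. Qed.
End Codes.

Lemma nth_map_seq (W : nat -> nat) M j d : j < M -> nth j (map W (seq 0 M)) d = W j.
Proof.
  intros Hj. rewrite (nth_indep _ d (W 0)) by (rewrite length_map, length_seq; lia).
  rewrite map_nth, seq_nth; auto.
Qed.

Lemma map_seq_nth (t : nat -> nat) xs : map (fun j => t (nth j xs 0)) (seq 0 (length xs)) = map t xs.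
Proof.
  induction xs; simpl; f_equal. rewrite <- seq_shift, map_map. simpl. exact IHxs.
Qed.

Definition rel_spec (Z : structure) (rZ : rf) :=
  forall i xs, length xs = sar Z i -> in_dom Z xs ->
    eval empty_oracle rZ (i :: xs) (b2n (srel Z i xs)).

Lemma BR_ok (Z : structure) rZ sZ tc M (t : nat -> nat) env :
  rel_spec Z rZ -> (forall x, eval empty_oracle sZ [x] (sar Z x)) ->
  bnd rZ <= M -> (forall y, sdom Z (t y) = true) ->
  (forall j, eval empty_oracle (tc (RProj (S j))) env (t (nth (S j) env 0))) ->
  eval empty_oracle (BR rZ sZ tc M) env
    (b2n (srel Z (pred (nth 0 env 0)) (map (fun j => t (nth (S j) env 0)) (seq 0 (sar Z (pred (nth 0 env 0))))))).
Proof.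
  intros Hr Hs HM Ht Htc.
  set (K := pred (nth 0 env 0)).
  set (xsZ := map (fun j => t (nth (S j) env 0)) (seq 0 (sar Z K))).
  assert (Hspec : eval empty_oracle rZ (K :: xsZ) (b2n (srel Z K xsZ))).
  { apply Hr. unfold xsZ. now rewrite length_map, length_seq.
    intros x Hx. unfold xsZ in Hx. apply in_map_iff in Hx. destruct Hx as [j [<- _]]. apply Ht. }
  eapply ev_comp.
  - apply evs_cons.
    + eapply ev1; [apply evP; reflexivity|apply PRED_ok].
    + apply (evals_map _ _ (fun j => ifz (sar Z K - j) (t (nth (S j) env 0)) 0)).
      intros j. apply c_if_ok; [|apply Htc|apply cconst_ok].
      apply c_sub_ok; [|apply cconst_ok]. eapply ev1; [|apply Hs].
      eapply ev1; [apply evP; reflexivity|apply PRED_ok].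
  - apply (eval_bnd _ _ _ _ Hspec). split.
    + intros [|j] Hj; [reflexivity|]. simpl.
      rewrite nth_map_seq by lia.
      destruct (Nat.lt_ge_cases j (sar Z K)) as [Hl|Hl].
      * unfold xsZ. rewrite nth_map_seq by lia.
        destruct (sar Z K - j) eqn:E; [lia|reflexivity].
      * rewrite nth_overflow by (unfold xsZ; rewrite length_map, length_seq; lia).
        replace (sar Z K - j) with 0 by lia. reflexivity.
    + simpl. unfold xsZ. rewrite !length_map, !length_seq. lia.
Qed.

Lemma Cstr_computable A B a0 bs isS :
  computable_structure A -> computable_structure B ->
  sdom A a0 = true -> sdom B bs = true -> (forall i, sar A i = sar B i) ->
  computable_structure (Cstr A B a0 bs isS).
Proof.
  intros [[dA HdA] [[sA HsA] [rA HrA]]] [[dB HdB] [[sB HsB] [rB HrB]]] Ha0 Hbs Hsar.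
  split; [|split].
  - exists (c_if (c_isA isS (c_cp (RProj 0))) (RComp dA [c_vl (RProj 0)]) (RComp dB [c_vl (RProj 0)])).
    intros x. eapply ev_eq.
    + apply c_if_ok.
      * apply c_isA_ok, c_cp_ok. apply evP. reflexivity.
      * eapply ev1; [apply c_vl_ok, evP; reflexivity|apply HdA].
      * eapply ev1; [apply c_vl_ok, evP; reflexivity|apply HdB].
    + simpl. rewrite ifz_b2n. destruct (isA isS (cp x)); reflexivity.
  - exists (c_if (RProj 0) (RComp sA [c_K]) (cconst 2)).
    intros x. eapply ev_eq.
    + apply c_if_ok; [apply evP; reflexivity| |apply cconst_ok].
      eapply ev1; [eapply ev1; [apply evP; reflexivity|apply PRED_ok]|apply HsA].
    + destruct x; reflexivity.
  - set (C := c_cp (RProj 1)).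
    set (M := max (bnd rA) (bnd rB)).
    exists (c_if (RProj 0)
                 (c_if (c_isA isS C) (BR rA sA (c_tA isS dA a0 C) M) (BR rB sB (c_tB isS dB bs C) M))
                 (c_eq (c_cp (RProj 1)) (c_cp (RProj 2)))).
    intros i xs Hlen Hdom.
    assert (HC : eval empty_oracle C (i :: xs) (cp (nth 0 xs 0))).
    { apply c_cp_ok, evP. reflexivity. }
    eapply ev_eq.
    + apply c_if_ok; [apply evP; reflexivity| |].
      * apply c_if_ok; [apply c_isA_ok; exact HC| |].
        -- apply (BR_ok A rA sA _ M (tA A a0 isS (cp (nth 0 xs 0)))).
           ++ exact HrA.
           ++ exact HsA.
           ++ unfold M; lia.
           ++ intros y. unfold tA. destruct (_ && _ && sdom A (vl y)) eqn:E; auto.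
              apply Bool.andb_true_iff in E. tauto.
           ++ intros j. apply c_tA_ok; auto. apply evP. reflexivity.
        -- apply (BR_ok B rB sB _ M (tB B bs isS (cp (nth 0 xs 0)))).
           ++ exact HrB.
           ++ exact HsB.
           ++ unfold M; lia.
           ++ intros y. unfold tB. destruct (_ && _ && sdom B (vl y)) eqn:E; auto.
              apply Bool.andb_true_iff in E. tauto.
           ++ intros j. apply c_tB_ok; auto. apply evP. reflexivity.
      * apply c_eq_ok; apply c_cp_ok, evP; reflexivity.
    + destruct i as [|k]; [reflexivity|].
      simpl in Hlen |- *. rewrite ifz_b2n.
      rewrite <- Hlen, map_seq_nth. rewrite <- Hsar, <- Hlen, map_seq_nth.
      destruct (isA isS (cp (nth 0 xs 0))); reflexivity.
Qed.

Definition hfun (f : nat -> nat) x := pr (cp x) (if cp x =? 0 then f (vl x) else vl x).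
Definition gfun x := pr (S (cp x)) (vl x).

Lemma emb_SX A B f a0 : is_embedding A B f -> sdom A a0 = true ->
  is_embedding (Cstr A B a0 (f a0) true) (Cstr A B a0 (f a0) false) (hfun f).
Proof.
  intros [Hsar [Hdom [Hinj Hrel]]] Ha0. unfold hfun.
  split; [intros; reflexivity|]. split; [|split].
  - intros x Hx. cbn [sdom Cstr] in *. unfold isA in *. simpl andb in *. rewrite ?cp_pr, ?vl_pr.
    destruct (cp x =? 0); auto.
  - intros x y Hx Hy E.
    pose proof (f_equal cp E) as E1. pose proof (f_equal vl E) as E2.
    rewrite !cp_pr in E1. rewrite !vl_pr in E2.
    rewrite <- (pr_cp_vl x), <- (pr_cp_vl y), E1. f_equal.
    rewrite E1 in E2. simpl in Hx, Hy. unfold isA in Hx, Hy. simpl in Hx, Hy. rewrite E1 in Hx.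
    destruct (cp y =? 0); auto.
  - intros [|k] xs Hlen Hd.
    + destruct xs as [|x0 [|x1 [|]]]; simpl in Hlen; try discriminate.
      simpl. rewrite !cp_pr. reflexivity.
    + destruct xs as [|x0 xs'].
      * simpl. apply (Hrel k []); [exact Hlen| intros x []].
      * cbn [srel Cstr]; simpl nth. rewrite cp_pr. set (c := cp x0).
        rewrite map_map. unfold isA. simpl andb.
        destruct (c =? 0) eqn:Ec.
        -- apply Nat.eqb_eq in Ec.
           rewrite <- Hrel.
           2: { rewrite length_map. exact Hlen. }
           2: { intros z Hz. apply in_map_iff in Hz. destruct Hz as [y [<- _]].
                unfold tA. destruct (_ && _ && _) eqn:E; [apply Bool.andb_true_iff in E; tauto|exact Ha0]. }
           f_equal. rewrite !map_map. apply map_ext_in. intros y Hy.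
           specialize (Hd y Hy). simpl in Hd. unfold isA in Hd. simpl in Hd.
           unfold tA, tB, isA. rewrite cp_pr, vl_pr. rewrite Ec. simpl andb.
           destruct (cp y =? 0) eqn:Ey; simpl.
           ++ rewrite Hd. rewrite (Hdom _ Hd). reflexivity.
           ++ reflexivity.
        -- f_equal. rewrite ?map_map. apply map_ext_in. intros y Hy.
           unfold tB, isA. rewrite cp_pr, vl_pr. simpl andb. rewrite Ec. simpl negb.
           destruct (cp y =? c) eqn:Ey; [|reflexivity].
           apply Nat.eqb_eq in Ey. rewrite Ey, Ec. reflexivity.
Qed.

Lemma emb_XS A B f a0 bs : is_embedding A B f ->
  is_embedding (Cstr A B a0 bs false) (Cstr A B a0 bs true) gfun.
Proof.
  intros [Hsar [Hdom [Hinj Hrel]]]. unfold gfun.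
  split; [intros; reflexivity|]. split; [|split].
  - intros x Hx. cbn [sdom Cstr] in *. unfold isA in *. simpl andb in *. rewrite ?cp_pr, ?vl_pr. exact Hx.
  - intros x y Hx Hy E.
    pose proof (f_equal cp E) as E1. pose proof (f_equal vl E) as E2.
    rewrite !cp_pr in E1. rewrite !vl_pr in E2. injection E1 as E1.
    rewrite <- (pr_cp_vl x), <- (pr_cp_vl y), E1, E2. reflexivity.
  - intros [|k] xs Hlen Hd.
    + destruct xs as [|x0 [|x1 [|]]]; simpl in Hlen; try discriminate.
      simpl. rewrite !cp_pr. reflexivity.
    + destruct xs as [|x0 xs'].
      * simpl. symmetry. apply (Hrel k []); [exact Hlen| intros x []].
      * cbn [srel Cstr]; simpl nth. rewrite cp_pr. set (c := cp x0).
        rewrite map_map. cbn [isA andb Nat.eqb negb].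
        f_equal. rewrite ?map_map. apply map_ext_in. intros y Hy.
        unfold tB, isA. rewrite cp_pr, vl_pr. simpl. reflexivity.
Qed.

Lemma emb_back A B f a0 (H : nat -> nat) : is_embedding A B f -> sdom A a0 = true ->
  is_embedding (Cstr A B a0 (f a0) true) (Cstr A B a0 (f a0) false) H ->
  is_embedding A B (fun a => vl (H (pr 0 a))).
Proof.
  intros [Hsar [Hdom [Hinj Hrel]]] Ha0 [HHsar [HHdom [HHinj HHrel]]].
  assert (Hd0 : forall a, sdom A a = true -> sdom (Cstr A B a0 (f a0) true) (pr 0 a) = true).
  { intros a Ha. simpl. rewrite cp_pr, vl_pr. exact Ha. }
  assert (HE : forall a b, sdom A a = true -> sdom A b = true -> cp (H (pr 0 a)) = cp (H (pr 0 b))).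
  { intros a b Ha Hb. pose proof (HHrel 0 [pr 0 a; pr 0 b] eq_refl) as R.
    simpl in R. rewrite !cp_pr in R. simpl in R.
    apply Nat.eqb_eq. apply R. intros z [<-|[<-|[]]]; auto. }
  assert (HDX : forall a, sdom A a = true -> sdom B (vl (H (pr 0 a))) = true).
  { intros a Ha. pose proof (HHdom _ (Hd0 a Ha)) as D. simpl in D. exact D. }
  split; [exact Hsar|]. split; [|split].
  - exact HDX.
  - intros x y Hx Hy E.
    assert (E' : H (pr 0 x) = H (pr 0 y)).
    { rewrite <- (pr_cp_vl (H (pr 0 x))), <- (pr_cp_vl (H (pr 0 y))), E, (HE x y Hx Hy). reflexivity. }
    apply HHinj in E'; auto. apply (f_equal vl) in E'. rewrite !vl_pr in E'. exact E'.
  - intros k xs Hlen Hd. destruct xs as [|x0 xs'].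
    + simpl. apply (Hrel k []); [exact Hlen| intros x []].
    + pose proof (HHrel (S k) (map (pr 0) (x0 :: xs'))) as R.
      rewrite length_map in R. specialize (R Hlen).
      assert (Hdm : in_dom (Cstr A B a0 (f a0) true) (map (pr 0) (x0 :: xs'))).
      { intros z Hz. apply in_map_iff in Hz. destruct Hz as [y [<- Hy]]. apply Hd0, Hd, Hy. }
      specialize (R Hdm).
      cbn [srel Cstr] in R; simpl nth in R. rewrite cp_pr in R. cbn [isA andb Nat.eqb] in R.
      rewrite !map_map in R.
      etransitivity; [|etransitivity; [exact R|]].
      * f_equal. apply map_ext_in. intros y Hy. simpl.
        unfold tB, isA. simpl andb. rewrite (HE y x0) by (apply Hd; auto; left; auto).
        rewrite Nat.eqb_refl. rewrite (HDX y) by (apply Hd; auto). reflexivity.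
      * f_equal. rewrite <- (map_id (x0 :: xs')) at 2. apply map_ext_in. intros y Hy.
        unfold tA, isA. rewrite cp_pr, vl_pr. simpl. rewrite (Hd y Hy). reflexivity.
Qed.

Definition hcode ef := RComp PAIR [c_cp (RProj 0);
   c_if (c_eq (c_cp (RProj 0)) (cconst 0)) (RComp ef [c_vl (RProj 0)]) (c_vl (RProj 0))].
Definition gcode := RComp PAIR [RComp RSucc [c_cp (RProj 0)]; c_vl (RProj 0)].
Definition Gcode eH := c_vl (RComp eH [RComp PAIR [cconst 0; RProj 0]]).

Theorem proposition3p4 (D : nat -> bool) :
  low_for_embeddings D <-> low_for_biembeddings D.
Proof.
  split.
  - intros Hl A B cA cB [H1 H2]. split; apply Hl; auto.
  - intros Hl A B cA cB [f [[ef Hef] Hf]].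
    destruct (classic (exists a0, sdom A a0 = true)) as [[a0 Ha0]|Hne].
    + assert (Hbs : sdom B (f a0) = true) by (apply Hf; exact Ha0).
      assert (Hsar : forall i, sar A i = sar B i) by apply Hf.
      destruct (Hl (Cstr A B a0 (f a0) true) (Cstr A B a0 (f a0) false)
                   (Cstr_computable _ _ _ _ _ cA cB Ha0 Hbs Hsar)
                   (Cstr_computable _ _ _ _ _ cA cB Ha0 Hbs Hsar)) as [[H [[eH HeH] HH]] _].
      { split.
        - exists (hfun f). split; [|apply emb_SX; [exact Hf|exact Ha0]].
          exists (hcode ef). intros x. eapply ev_eq.
          + eapply ev2; [apply c_cp_ok, evP; reflexivity| |apply PAIR_ok].
            apply c_if_ok; [apply c_eq_ok; [apply c_cp_ok, evP; reflexivity|apply cconst_ok]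
                           | eapply ev1; [apply c_vl_ok, evP; reflexivity|apply Hef]
                           | apply c_vl_ok, evP; reflexivity].
          + unfold hfun. rewrite ifz_b2n. reflexivity.
        - exists gfun. split; [|eapply emb_XS; exact Hf].
          exists gcode. intros x.
          eapply ev2; [| apply c_vl_ok, evP; reflexivity | apply PAIR_ok].
          eapply ev1; [apply c_cp_ok, evP; reflexivity| apply (ev_succ D [_])]. }
      exists (fun a => vl (H (pr 0 a))). split; [|eapply emb_back; eauto].
      exists (Gcode eH). intros a. apply c_vl_ok. eapply ev1; [|apply HeH].
      eapply ev2; [apply cconst_ok|apply evP; reflexivity|apply PAIR_ok].
    + exists (fun _ => 0). split; [exists RZero; intros; apply ev_zero|].
      destruct Hf as [Hsar [_ [_ Hrel]]].
      split; [exact Hsar|]. split; [intros x Hx; exfalso; eauto|].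
      split; [intros x y Hx; exfalso; eauto|].
      intros i xs Hlen Hd. destruct xs as [|x xs].
      * apply (Hrel i [] Hlen Hd).
      * exfalso. apply Hne. exists x. apply Hd. left; auto.
Qed.
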